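(* Let $\Omega=\{\Sigma_1,\dots,\Sigma_n\}$ be a distribution of a finite alphabet $\Sigma$ and let $\mathcal L\subseteq\Sigma^\star$ be a product language over $\Omega$. Fix $i$, write $\Gamma=\bigcup_{j\ne i}\Sigma_j$, and for each $j\neq i$ let $O_j\subseteq\mathcal L|_{\Sigma_j}$. Let $\sigma\in\Sigma_i^\star$ and $\sigma'\in\|_{j\neq i}(O_j,\Sigma_j)$ satisfy $\sigma'|_{\Sigma_i}=\sigma|_{\Gamma}$, and let $\sigma_{int}\in(\{\sigma\},\Sigma_i)\,\|\,(\{\sigma'\},\Gamma)$. Then $\sigma\in\mathcal L|_{\Sigma_i}$ if and only if $\sigma_{int}\in\mathcal L$.
   Context: $\sigma|_{\Sigma'}$ denotes the projection of a word onto $\Sigma'$ (the subsequence of symbols lying in $\Sigma'$), lifted elementwise to sets. For languages $\mathcal L_k\subseteq A_k^\star$, $\|_{k}(\mathcal L_k,A_k)=\{w\in(\bigcup_kA_k)^\star\mid\forall k.\ w|_{A_k}\in\mathcal L_k\}$. A distribution of $\Sigma$ is a finite set $\Omega=\{\Sigma_1,\dots,\Sigma_n\}$ of subsets with union $\Sigma$. $\mathcal L\subseteq\Sigma^\star$ is a product language over $\Omega$ if $\mathcal L=\|_{i=1}^n(\mathcal L_i,\Sigma_i)$ for some $\mathcal L_i\subseteq\Sigma_i^\star$. *)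

(* Defs.v *)
From mathcomp Require Import all_boot.
Set Implicit Arguments. Unset Strict Implicit. Unset Printing Implicit Defensive.

Definition lang (T : Type) := seq T -> Prop.

Section Lang.
Variable T : finType.

Definition proj (A : {set T}) (w : seq T) : seq T := [seq x <- w | x \in A].

Definition proj_lang (A : {set T}) (L : lang T) : lang T :=
  fun w => exists v, L v /\ w = proj A v.

Definition word_over (A : {set T}) (w : seq T) : bool := all (fun x => x \in A) w.

Definition sync (I : finType) (P : pred I) (A : I -> {set T}) (L : I -> lang T)
  : lang T :=
  fun w => word_over (\bigcup_(k | P k) A k) w /\
           forall k, P k -> L k (proj (A k) w).

Definition sync2 (L1 : lang T) (A1 : {set T}) (L2 : lang T) (A2 : {set T})
  : lang T :=
  fun w => word_over (A1 :|: A2) w /\ L1 (proj A1 w) /\ L2 (proj A2 w).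

Definition distribution (n : nat) (Sig : 'I_n -> {set T}) : Prop :=
  \bigcup_(k < n) Sig k = [set: T].

Definition product_language (n : nat) (Sig : 'I_n -> {set T}) (L : lang T)
  : Prop :=
  exists Lk : 'I_n -> lang T,
    (forall k w, Lk k w -> word_over (Sig k) w) /\
    forall w, L w <-> sync predT Sig Lk w.

End Lang.

(* Main.v *)
Require Import Defs.
From mathcomp Require Import all_boot.

Lemma proj_proj (T : finType) (A B : {set T}) (w : seq T) :
  A \subset B -> proj A (proj B w) = proj A w.
Proof.
move=> /subsetP sAB; elim: w => [|x w IH] //=.
case hB: (x \in B) => /=; case hA: (x \in A) => //=; try by rewrite IH.
by rewrite (sAB _ hA) in hB.
Qed.

Theorem mainTheorem4 (T : finType) (n : nat) (Sig : 'I_n -> {set T})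
  (L : lang T) (i : 'I_n) (O : 'I_n -> lang T) (sigma sigma' sigma_int : seq T) :
  distribution Sig ->
  product_language Sig L ->
  (forall j, j != i -> forall w, O j w -> proj_lang (Sig j) L w) ->
  word_over (Sig i) sigma ->
  sync (fun j => j != i) Sig O sigma' ->
  proj (Sig i) sigma' = proj (\bigcup_(j | j != i) Sig j) sigma ->
  sync2 (fun w => w = sigma) (Sig i)
        (fun w => w = sigma') (\bigcup_(j | j != i) Sig j) sigma_int ->
  (proj_lang (Sig i) L sigma <-> L sigma_int).
Proof.
move=> hD [Lk [hLk hL]] hO _ [_ hs'] _ [_ [hi hG]]; split; last first.
  by move=> Lint; exists sigma_int; split.
case=> v [Lv hv]; apply/hL; split.
  apply/allP=> x _; have: x \in [set: T] by rewrite inE.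
  by rewrite -hD.
move=> k _; have [->|nki] := eqVneq k i.
  by rewrite hi hv; case/hL: Lv => _ /(_ i isT).
have sub : Sig k \subset \bigcup_(j | j != i) Sig j by apply: bigcup_sup.
rewrite -(@proj_proj _ _ _ sigma_int sub) hG.
have [v' [Lv' ->]] := hO k nki _ (hs' k nki).
by case/hL: Lv' => _ /(_ k isT).
Qed.
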